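(* In the FAVANO process described in the context, for every time step $t\ge 0$, $$\mathbb{E}[\Phi_{t+1}]\le(1-\kappa)\,\mathbb{E}[\Phi_t]+3\frac{s^2}{n}\eta^2\sum_{i=1}^n\mathbb{E}\big\|\check h^i_{t+1}\big\|^2,\qquad \kappa=\frac{1}{n}\cdot\frac{s(n-s)}{2(n+1)(s+1)} .$$
   Context: FAVANO process. Fix integers $n\ge1$, $1\le s\le n$, $K\ge1$, $d\ge1$, a step size $\eta>0$ and differentiable $f_1,\dots,f_n:\mathbb{R}^d\to\mathbb{R}$, $f=\frac1n\sum_i f_i$. All random variables live on one probability space. For each client $i$ a stochastic gradient oracle returns, at a query point $x$, $\widetilde g^i(x)=\nabla f_i(x)+\xi$ where, conditionally on everything generated before the query (including $x$), $\xi$ has mean zero (each query uses fresh noise). Initialize $w_0\in\mathbb{R}^d$ deterministic and $w_0^i=w_0$ for all $i$. For each $t\ge1$, each client $i$ and each $q\ge1$ define recursively $\widetilde h^i_{t,q}=\widetilde g^i\big(w^i_{t-1}-\eta\sum_{r=1}^{q-1}\widetilde h^i_{t,r}\big)$ and $h^i_{t,q}=\nabla f_i\big(w^i_{t-1}-\eta\sum_{r=1}^{q-1}\widetilde h^i_{t,r}\big)$. At each $t\ge1$ there are random integers $E^1_t,\dots,E^n_t\ge0$ with $\mathbf{P}(E^i_t>0)>0$, and a random subset $\mathcal{S}_t\subseteq\{1,\dots,n\}$ uniformly distributed among subsets of size $s$; the family $(\mathcal S_t,E^1_t,\dots,E^n_t)$ is independent of all the other randomness (the past up to time $t-1$ and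 all $\widetilde h^i_{t,q}$), and $\mathcal S_t$ is independent of $(E^i_t)_i$. The weight $\alpha^i_t$ is either $\mathbf{P}(E^i_t>0)\,(E^i_t\wedge K)$ (stochastic version) or $\mathbb{E}[E^i_t\wedge K]$ (deterministic version), where $a\wedge b=\min(a,b)$. Set $\check h^i_t=\frac{1}{\alpha^i_t}\sum_{q=1}^{E^i_t\wedge K}\widetilde h^i_{t,q}$ if $E^i_t>0$ and $\check h^i_t=0$ otherwise. Updates: $w_t=\frac{1}{s+1}\big(w_{t-1}+\sum_{i\in\mathcal S_t}(w^i_{t-1}-\eta\check h^i_t)\big)$; $w^i_t=w_t$ for $i\in\mathcal S_t$ and $w^i_t=w^i_{t-1}$ for $i\notin\mathcal S_t$. Define $\mu_t=\frac{1}{n+1}\big(w_t+\sum_{i=1}^n w^i_t\big)$ and $\Phi_t=\|w_t-\mu_t\|^2+\sum_{i=1}^n\|w^i_t-\mu_t\|^2$. All expectations appearing are assumed finite. *)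

(* Defs.v *)
From HB Require Import structures.
From mathcomp Require Import all_boot all_order all_algebra.
From mathcomp Require Import all_classical all_reals all_analysis.
Set Implicit Arguments. Unset Strict Implicit. Unset Printing Implicit Defensive.
Import Order.TTheory GRing.Theory Num.Theory.
Import numFieldNormedType.Exports.
Local Open Scope classical_set_scope.
Local Open Scope ring_scope.

Definition sqnorm (R : realType) (d : nat) (v : 'rV[R]_d) : R :=
  \sum_(k < d) v 0 k ^+ 2.

(* gradient of f : R^d -> R, as the row vector of its partial derivatives
   (for differentiable f this is the gradient). *)
Definition gradf (R : realType) (d : nat) (f : 'rV[R]_d -> R) (x : 'rV[R]_d)
  : 'rV[R]_d := \row_(k < d) ('D_(delta_mx 0 k) f x).

(* Generators of the sigma-algebras generated by random elements. *)
Definition vec_events (R : realType) (T : Type) (d : nat) (X : T -> 'rV[R]_d)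
  : set (set T) :=
  [set A | exists (k : 'I_d) (B : set R), measurable B /\
                                 A = (fun x => X x 0 k) @^-1` B].

Definition nat_events (T : Type) (Y : T -> nat) : set (set T) :=
  [set A | exists m : nat, A = [set x | Y x = m]].

Definition subset_events (T : Type) (n : nat) (S : T -> {set 'I_n})
  : set (set T) := [set A | exists B : {set 'I_n}, A = [set x | S x = B]].

Definition indep_gen (R : realType) (dT : measure_display)
  (T : measurableType dT) (P : probability T R) (G1 G2 : set (set T)) : Prop :=
  forall A B, <<s G1 >> A -> <<s G2 >> B -> P (A `&` B) = (P A * P B)%E.

(* Events generated by the past up to time t-1: S_r, E^i_r (1 <= r < t)
   and all oracle outputs htil^j_{r,q} (1 <= r < t, q >= 1). *)
Definition past_events (R : realType) (T : Type) (n d : nat)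
  (Ssel : nat -> T -> {set 'I_n}) (E : nat -> 'I_n -> T -> nat)
  (htil : nat -> 'I_n -> nat -> T -> 'rV[R]_d) (t : nat) : set (set T) :=
  [set A | exists r, (1 <= r < t)%N /\
     (subset_events (Ssel r) A \/ (exists i, nat_events (E r i) A) \/
      exists i q, (1 <= q)%N /\ vec_events (htil r i q) A)].

Definition query_point (R : realType) (T : Type) (n d : nat) (eta : R)
  (htil : nat -> 'I_n -> nat -> T -> 'rV[R]_d) (wprev : 'rV[R]_d)
  (t : nat) (i : 'I_n) (q : nat) (x : T) : 'rV[R]_d :=
  wprev - eta *: \sum_(1 <= r < q) htil t i r x.

Definition alphaw (R : realType) (dT : measure_display) (T : measurableType dT)
  (P : probability T R) (n K : nat) (E : nat -> 'I_n -> T -> nat)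
  (stoch : bool) (t : nat) (i : 'I_n) (x : T) : R :=
  if stoch then fine (P [set y | (0 < E t i y)%N]) * (minn (E t i x) K)%:R
  else fine (\int[P]_y ((minn (E t i y) K)%:R)%:E)%E.

Definition hcheck (R : realType) (dT : measure_display) (T : measurableType dT)
  (P : probability T R) (n d K : nat) (E : nat -> 'I_n -> T -> nat)
  (htil : nat -> 'I_n -> nat -> T -> 'rV[R]_d) (stoch : bool)
  (t : nat) (i : 'I_n) (x : T) : 'rV[R]_d :=
  if (0 < E t i x)%N then
    (alphaw P K E stoch t i x)^-1 *: \sum_(1 <= q < (minn (E t i x) K).+1) htil t i q x
  else 0.

(* (w_t, (w^i_t)_i) *)
Fixpoint favano_state (R : realType) (dT : measure_display) (T : measurableType dT)
  (P : probability T R) (n d s K : nat) (eta : R) (w0 : 'rV[R]_d)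
  (Ssel : nat -> T -> {set 'I_n}) (E : nat -> 'I_n -> T -> nat)
  (htil : nat -> 'I_n -> nat -> T -> 'rV[R]_d) (stoch : bool)
  (t : nat) (x : T) : 'rV[R]_d * ('I_n -> 'rV[R]_d) :=
  match t with
  | 0 => (w0, fun _ => w0)
  | t'.+1 =>
    let st := favano_state P s K eta w0 Ssel E htil stoch t' x in
    let wn := (s.+1%:R)^-1 *:
       (st.1 + \sum_(i in Ssel t x) (st.2 i - eta *: hcheck P K E htil stoch t i x)) in
    (wn, fun i => if i \in Ssel t x then wn else st.2 i)
  end.

Definition mu_of (R : realType) (n d : nat) (st : 'rV[R]_d * ('I_n -> 'rV[R]_d))
  : 'rV[R]_d := (n.+1%:R)^-1 *: (st.1 + \sum_(i < n) st.2 i).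

Definition Phi_of (R : realType) (n d : nat) (st : 'rV[R]_d * ('I_n -> 'rV[R]_d))
  : R := sqnorm (st.1 - mu_of st) + \sum_(i < n) sqnorm (st.2 i - mu_of st).

(* Main.v *)
Require Import Defs.
From HB Require Import structures.
From mathcomp Require Import all_boot all_order all_algebra.
From mathcomp Require Import fingroup perm.
From mathcomp Require Import all_classical all_reals all_analysis.
Import Order.TTheory GRing.Theory Num.Theory.
Import numFieldNormedType.Exports.
Local Open Scope classical_set_scope.
Local Open Scope ring_scope.
From mathcomp Require Import measurable_realfun.
From mathcomp Require Import ring lra zify.
Set Implicit Arguments. Unset Strict Implicit. Unset Printing Implicit Defensive.

Section Indep.
Context (R : realType) (dT : measure_display) (T : measurableType dT) (P : probability T R).
Variable G : set (set T).
Hypothesis HG : G `<=` measurable.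
Local Notation T' := (g_sigma_algebraType G).

Lemma sub_meas C : <<s G >> C -> measurable C.
Proof. by apply: smallest_sub => //; exact: sigma_algebra_measurable. Qed.

Lemma mTT' (g : T' -> R) : measurable_fun [set: T'] g -> measurable_fun [set: T] (g : T -> R).
Proof.
move=> mg _ U mU; rewrite setTI; apply: sub_meas.
by have := mg measurableT U mU; rewrite setTI.
Qed.

Variable A : set T.
Hypothesis mA : measurable A.
Hypothesis Hind : forall C, <<s G >> C -> P (A `&` C) = (P A * P C)%E.

Import HBNNSimple.

Let int_nnsfun (h : {nnsfun T' >-> R}) :
  (\int[P]_(x in A) (h x)%:E = P A * \int[P]_x (h x)%:E)%E.
Proof.
have mh r : measurable ((h : T -> R) @^-1` [set r]).
  by apply: sub_meas; exact: (measurable_funPTI h (measurable_set1 r)).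
have mfT : measurable_fun [set: T] (h : T -> R) by apply: mTT'.
under eq_integral do rewrite fimfunE -fsumEFin//.
rewrite ge0_integral_fsum//; last 2 first.
  - move=> r; apply/measurable_EFinP; apply: measurable_funM; first exact: measurable_cst.
    exact: measurable_indic.
  - by move=> r x _; rewrite EFinM nnfun_muleindic_ge0.
under [X in (_ * X)%E]eq_integral do rewrite fimfunE -fsumEFin//.
rewrite [X in (_ * X)%E]ge0_integral_fsum//; last 2 first.
  - move=> r; apply/measurable_EFinP; apply: measurable_funM; first exact: measurable_cst.
    exact: measurable_indic.
  - by move=> r x _; rewrite EFinM nnfun_muleindic_ge0.
rewrite ge0_mule_fsumr; last first.
  by move=> r; apply: integral_ge0 => x _; rewrite EFinM nnfun_muleindic_ge0.
apply: eq_fsbigr => r _.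
rewrite (integralZl_indic mA (fun k => (h : T -> R) @^-1` [set k]))//; last first.
  move=> k0; apply/seteqP; split => // x /= hx; have : 0 <= r by rewrite -hx; exact: fun_ge0.
  by rewrite leNgt k0.
rewrite (integralZl_indic measurableT (fun k => (h : T -> R) @^-1` [set k]))//; last first.
  move=> k0; apply/seteqP; split => // x /= hx; have : 0 <= r by rewrite -hx; exact: fun_ge0.
  by rewrite leNgt k0.
rewrite !integral_indic// setIT.
rewrite muleCA; congr (_ * _)%E; rewrite setIC; apply: Hind.
exact: (measurable_funPTI h (measurable_set1 r)).
Qed.

Lemma indep_integral (Y : T' -> R) : measurable_fun [set: T'] Y -> (forall x, 0 <= Y x) ->
  (\int[P]_(x in A) (Y x)%:E = P A * \int[P]_x (Y x)%:E)%E.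
Proof.
move=> mY Y0.
have mYe : measurable_fun [set: T'] (EFin \o Y) by apply/measurable_EFinP.
pose f_ := nnsfun_approx (@measurableT _ T') mYe.
have mfn n : measurable_fun [set: T] (fun x => ((f_ n : T' -> R) x)%:E).
  by apply/measurable_EFinP; apply: mTT'.
have cvf x : (EFin \o (f_ ^~ x) @ \oo --> (Y x)%:E).
  by apply: (@cvg_nnsfun_approx _ T' R setT (@measurableT _ T') (EFin \o Y) mYe) => // y _; rewrite lee_fin.
have ndf : forall x, {homo (fun n => ((f_ n : T' -> R) x)%:E) : a b / (a <= b)%N >-> (a <= b)%E}.
  by move=> x a b ab; rewrite lee_fin; exact/lefP/nd_nnsfun_approx.
transitivity (limn (fun n => \int[P]_(x in A) ((f_ n : T' -> R) x)%:E))%E.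
  rewrite -monotone_convergence//=.
  all: try (by move=> x _; exact: ndf); try (by move=> n x _; rewrite lee_fin); try (by move=> n; exact: measurable_funTS).
  by apply: eq_integral => x _; apply/esym/cvg_lim => //; exact: cvf.
rewrite (_ : \int[P]_x _ = limn (fun n => \int[P]_x ((f_ n : T' -> R) x)%:E))%E; last first.
  rewrite -monotone_convergence//=.
  all: try (by move=> x _; exact: ndf); try (by move=> n x _; rewrite lee_fin); try (by move=> n; exact: measurable_funTS).
  by apply: eq_integral => x _; apply/esym/cvg_lim => //; exact: cvf.
rewrite -limeMl//.
  by congr (limn _); apply/funext => n /=; rewrite int_nnsfun.
  by rewrite fin_num_measure.
apply/ereal_nondecreasing_is_cvgn => a b ab; apply: ge0_le_integral => //.
all: try (by move=> x _; rewrite lee_fin).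
by move=> x _; exact: ndf.
Qed.
End Indep.

Section Gen.
Context (R : realType) (dT : measure_display) (T : measurableType dT).
Variable G : set (set T).
Local Notation T' := (g_sigma_algebraType G).
Definition mG (f : T -> R) := measurable_fun [set: T'] (f : T' -> R).

Lemma mG_cst c : mG (fun _ => c).
Proof. exact: measurable_cst. Qed.
Lemma mG_add f g : mG f -> mG g -> mG (fun x => f x + g x).
Proof. exact: measurable_funD. Qed.
Lemma mG_sub f g : mG f -> mG g -> mG (fun x => f x - g x).
Proof. exact: measurable_funB. Qed.
Lemma mG_mul f g : mG f -> mG g -> mG (fun x => f x * g x).
Proof. exact: measurable_funM. Qed.
Lemma mG_ext f g : (forall x, f x = g x) -> mG f -> mG g.
Proof. by move=> e; rewrite /mG (_ : g = f) //; apply/funext => x; rewrite e. Qed.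

Lemma mG_sum (I : eqType) (s : seq I) (P : pred I) (h : I -> T -> R) :
  (forall i, i \in s -> P i -> mG (h i)) -> mG (fun x => \sum_(i <- s | P i) h i x).
Proof.
elim: s => [|a s IH] H.
  by apply: (mG_ext (f := fun _ => 0)); [move=> x; rewrite big_nil|exact: mG_cst].
have IH' : mG (fun x => \sum_(i <- s | P i) h i x).
  by apply: IH => i iis Pi; apply: H => //; rewrite inE iis orbT.
case Pa : (P a).
  apply: (mG_ext (f := fun x => h a x + \sum_(i <- s | P i) h i x)).
    by move=> x; rewrite big_cons Pa.
  by apply: mG_add => //; apply: H => //; rewrite inE eqxx.
by apply: (mG_ext _ IH') => x; rewrite big_cons Pa.
Qed.

Lemma mG_indb (b : T -> bool) : <<s G >> [set x | b x] -> mG (fun x => (b x)%:R).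
Proof.
move=> mb; apply: (mG_ext (f := fun x => \1_[set x | b x] x)).
  move=> x; rewrite indicE; case: (boolP (b x)) => bx.
    by rewrite mem_set.
  by rewrite memNset ?(negbTE bx) //=; apply/negP.
exact: (@measurable_indic _ T' R setT [set x | b x] mb).
Qed.

Lemma mG_gen (f : T -> R) : (forall U, measurable U -> G (f @^-1` U)) -> mG f.
Proof.
move=> H _ U mU; rewrite setTI; apply: sub_sigma_algebra; exact: H.
Qed.

Lemma level_min (Y : T -> nat) (K c : nat) :
  (forall m, <<s G >> [set x | Y x = m]) -> <<s G >> [set x | minn (Y x) K == c].
Proof.
move=> H.
have -> : [set x | minn (Y x) K == c] =
    \bigcup_m (if minn m K == c then [set x | Y x = m] else set0).
  apply/seteqP; split => x /=.
    by move=> e; exists (Y x) => //; rewrite e.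
  by move=> [m _]; case: ifP => // e /= ->.
apply: (@bigcupT_measurable _ T') => m.
by case: ifP => _; [exact: H|exact: (@measurable0 _ T')].
Qed.

End Gen.

Section Counting.
Variables (R : realType) (n s : nat).

Definition Nc (i j : 'I_n) : R :=
  \sum_(B : {set 'I_n} | #|B| == s) ((i \in B) && (j \in B))%:R.
Definition Mc : R := \sum_(B : {set 'I_n} | #|B| == s) 1.

Lemma Nc_perm (sg : {perm 'I_n}) i j : Nc (sg i) (sg j) = Nc i j.
Proof.
rewrite /Nc (reindex_inj (imset_inj (@perm_inj _ sg))) /=.
apply: eq_big => B; first by rewrite card_imset //; exact: perm_inj.
by move=> _; rewrite !mem_imset //; exact: perm_inj.
Qed.

Lemma Nc_diag i j : Nc i i = Nc j j.
Proof. by rewrite -(Nc_perm (tperm i j) i i) tpermL. Qed.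

Lemma Nc_off i j i' j' : i != j -> i' != j' -> Nc i j = Nc i' j'.
Proof.
move=> ij ij'.
pose t1 := tperm i i'. pose t2 := tperm (t1 j) j'.
have e1 : t2 (t1 i) = i'.
  rewrite /t2 /t1 tpermL tpermD //; last by rewrite eq_sym.
  by rewrite -{2}(tpermL i i') (inj_eq perm_inj) eq_sym.
have e2 : t2 (t1 j) = j' by rewrite /t2 tpermL.
by rewrite -e1 -e2 !Nc_perm.
Qed.

Lemma sum_in (f : 'I_n -> R) :
  \sum_(B : {set 'I_n} | #|B| == s) \sum_(i in B) f i = \sum_i Nc i i * f i.
Proof.
under eq_bigr do rewrite big_mkcond /=.
rewrite exchange_big /=; apply: eq_bigr => i _; rewrite /Nc mulr_suml.
by apply: eq_bigr => B _; rewrite andbb; case: (i \in B); rewrite ?mul1r ?mul0r.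
Qed.

Lemma sum_in2 (f : 'I_n -> 'I_n -> R) :
  \sum_(B : {set 'I_n} | #|B| == s) \sum_(i in B) \sum_(j in B) f i j =
  \sum_i \sum_j Nc i j * f i j.
Proof.
transitivity (\sum_(B : {set 'I_n} | #|B| == s) \sum_i \sum_j
    (((i \in B) && (j \in B))%:R * f i j)).
  apply: eq_bigr => B _; rewrite big_mkcond /=; apply: eq_bigr => i _.
  case: (i \in B) => /=; last by rewrite big1 // => j _; rewrite mul0r.
  by rewrite big_mkcond; apply: eq_bigr => j _; case: (j \in B); rewrite ?mul1r ?mul0r.
rewrite exchange_big /=; apply: eq_bigr => i _.
rewrite exchange_big /=; apply: eq_bigr => j _.
by rewrite /Nc mulr_suml.
Qed.

Lemma sum_mem (B : {set 'I_n}) : \sum_j ((j \in B)%:R : R) = #|B|%:R.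
Proof.
rewrite (eq_bigr (fun j => if j \in B then 1 else 0)); last by move=> j _; case: (j \in B).
by rewrite -big_mkcond /= -sum1_card natr_sum.
Qed.

Lemma Nc_diag_val i : n%:R * Nc i i = s%:R * Mc.
Proof.
have -> : n%:R * Nc i i = \sum_(j : 'I_n) Nc j j.
  by rewrite (eq_bigr (fun _ => Nc i i)) ?sumr_const ?card_ord ?mulr_natl // => j _; rewrite (Nc_diag j i).
rewrite /Nc exchange_big /= /Mc mulr_sumr; apply: eq_bigr => B /eqP <-.
by under eq_bigr do rewrite andbb; rewrite sum_mem mulr1.
Qed.

Lemma Nc_off_val i j : i != j -> n%:R * (n%:R - 1) * Nc i j = s%:R * (s%:R - 1) * Mc.
Proof.
move=> ij.
have cst (i' : 'I_n) (c : R) : \sum_(j' | j' != i') c = n%:R * c - c :> R.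
  have := @bigD1 R +%R 0 _ i' predT (fun _ => c) isT => /=.
  by rewrite sumr_const card_ord mulr_natl => ->; rewrite addrC addrK.
have -> : n%:R * (n%:R - 1) * Nc i j = \sum_(i' : 'I_n) \sum_(j' | j' != i') Nc i' j'.
  rewrite (eq_bigr (fun _ => n%:R * Nc i j - Nc i j)); last first.
    move=> i' _; rewrite -(cst i'); apply: eq_bigr => j' ji'.
    by apply: Nc_off => //; rewrite eq_sym.
  by rewrite sumr_const card_ord mulr_natl -mulr_natl; ring.
rewrite /Nc.
under eq_bigr do rewrite exchange_big /=.
rewrite exchange_big /= /Mc mulr_sumr; apply: eq_bigr => B /eqP cB.
rewrite mulr1.
transitivity (\sum_(i' : 'I_n) ((i' \in B)%:R * (s%:R - 1)) : R).
  apply: eq_bigr => i' _.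
  have := @bigD1 R +%R 0 _ i' predT (fun j' => ((j' \in B)%:R : R)) isT => /=.
  rewrite sum_mem cB => e.
  transitivity ((i' \in B)%:R * \sum_(j' | j' != i') ((j' \in B)%:R : R)).
    by rewrite mulr_sumr; apply: eq_bigr => j' _; rewrite -natrM mulnb.
  have -> : \sum_(j' | j' != i') ((j' \in B)%:R : R) = s%:R - (i' \in B)%:R.
    by rewrite e addrC addrK.
  by case: (i' \in B); rewrite ?mul0r ?mul1r.
by rewrite -mulr_suml sum_mem cB.
Qed.

End Counting.

Section Num.
Variable R : realType.

Lemma alphaS_ge0 (N S : R) : 1 <= S -> S <= N -> 2 <= N ->
  0 <= S / N - S * (N - S) / (2 * N * (N + 1) * (S + 1))
       - 3 / (2 * (S + 1)) * (S / N - S * (S - 1) / (N * (N - 1))).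
Proof.
move=> S1 SN N2.
have -> : S / N - S * (N - S) / (2 * N * (N + 1) * (S + 1))
       - 3 / (2 * (S + 1)) * (S / N - S * (S - 1) / (N * (N - 1))) =
   S * (2 * (S + 1) * (N * N - 1) - (N - S) * (4 * N + 2)) /
     (2 * (S + 1) * N * (N + 1) * (N - 1)).
  field.
  by repeat (apply/andP; split); apply/eqP; lra.
apply: divr_ge0.
  apply: mulr_ge0; first lra.
  nra.
apply: mulr_ge0; last lra.
apply: mulr_ge0; last lra.
apply: mulr_ge0; last lra.
apply: mulr_ge0; lra.
Qed.

Lemma alphaU_ge0 (N S : R) : 1 <= S -> S <= N -> 2 <= N ->
  0 <= 1 - S * (N - S) / (2 * N * (N + 1) * (S + 1))
       - 3 / (2 * (S + 1)) * (1 - 2 * (S / N) + S * (S - 1) / (N * (N - 1))).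
Proof.
move=> S1 SN N2.
have -> : 1 - S * (N - S) / (2 * N * (N + 1) * (S + 1))
       - 3 / (2 * (S + 1)) * (1 - 2 * (S / N) + S * (S - 1) / (N * (N - 1))) =
   (2 * (S + 1) * N * (N + 1) * (N - 1) - S * (N - S) * (N - 1)
      - 3 * (N + 1) * (N - S) * (N - S - 1)) /
     (2 * (S + 1) * N * (N + 1) * (N - 1)).
  field.
  by repeat (apply/andP; split); apply/eqP; lra.
apply: divr_ge0.
  have h1 : 3 * (N + 1) * (N - S) * (N - S - 1) <= 3 * (N + 1) * (N - S) * (N - 1).
    apply: ler_wpM2l; last lra.
    apply: mulr_ge0; lra.
  have hQ : 0 <= (N - 1) * (2 * S * N * N + 4 * S * N - N * N - N + S * S + 3 * S).
    apply: mulr_ge0; first lra.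
    nra.
  nra.
apply: mulr_ge0; last lra.
apply: mulr_ge0; last lra.
apply: mulr_ge0; last lra.
apply: mulr_ge0; lra.
Qed.

Lemma kappaE (n s : nat) : (0 < n)%N -> (s <= n)%N ->
  n%:R^-1 * ((s * (n - s))%:R / (2 * n.+1 * s.+1)%:R) =
  s%:R * (n%:R - s%:R) / (2 * n%:R * (n%:R + 1) * (s%:R + 1)) :> R.
Proof.
move=> n0 sn.
have N0 : (0 : R) < n%:R by rewrite ltr0n.
have S0 : (0 : R) <= s%:R by [].
rewrite !natrM natrB // !mulrSr.
field; repeat (apply/andP; split); apply/eqP; lra.
Qed.

Lemma final_num (n s : nat) (Mc u0s S2 Hs : R) : (1 <= s <= n)%N ->
  0 <= Mc -> 0 <= u0s -> 0 <= S2 -> 0 <= Hs ->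
  Mc * (u0s + S2) - (Mc * u0s + s%:R / n%:R * Mc * S2)
  + 3 / (2 * s.+1%:R) * (Mc * u0s - 2 * (s%:R / n%:R * Mc) * u0s + s%:R / n%:R * Mc * S2
       + s%:R * (s%:R - 1) / (n%:R * (n%:R - 1)) * Mc * (u0s - S2))
  + (2 + (n%:R - s%:R) / n.+1%:R) / s.+1%:R * (s%:R * (s%:R / n%:R * Mc * Hs))
  <= Mc * ((1 - n%:R^-1 * ((s * (n - s))%:R / (2 * n.+1 * s.+1)%:R)) * (u0s + S2)
           + 3 * (s%:R ^+ 2 / n%:R) * Hs).
Proof.
move=> /andP[s1 sn] M0 u0 S0 H0.
rewrite kappaE //; last exact: (leq_trans s1 sn).
have eN : (n.+1%:R : R) = n%:R + 1 by rewrite mulrSr.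
have eS : (s.+1%:R : R) = s%:R + 1 by rewrite mulrSr.
rewrite eN eS.
set N := (n%:R : R). set S := (s%:R : R).
have S1 : 1 <= S by rewrite /S ler1n.
have SN : S <= N by rewrite /S /N ler_nat.
have N0 : 0 < N by rewrite /N ltr0n; exact: (leq_trans s1 sn).
set k := S * (N - S) / (2 * N * (N + 1) * (S + 1)).
set p := S / N. set q := S * (S - 1) / (N * (N - 1)).
set c3 := 3 / (2 * (S + 1)). set cH := (2 + (N - S) / (N + 1)) / (S + 1).
rewrite -subr_ge0.
have -> : Mc * ((1 - k) * (u0s + S2) + 3 * (S ^+ 2 / N) * Hs) -
  (Mc * (u0s + S2) - (Mc * u0s + p * Mc * S2) +
   c3 * (Mc * u0s - 2 * (p * Mc) * u0s + p * Mc * S2 + q * Mc * (u0s - S2)) +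
   cH * (S * (p * Mc * Hs))) =
  Mc * ((1 - k - c3 * (1 - 2 * p + q)) * u0s + (p - k - c3 * (p - q)) * S2
        + (S * p * (3 - cH)) * Hs).
  rewrite /p; field; lra.
apply: mulr_ge0 => //.
have aH : 0 <= S * p * (3 - cH).
  apply: mulr_ge0; first by apply: mulr_ge0; [lra| rewrite /p; apply: divr_ge0; lra].
  rewrite subr_ge0 /cH ler_pdivrMr; last lra.
  have : (N - S) / (N + 1) <= 1 by rewrite ler_pdivrMr; lra.
  have : 0 <= (N - S) / (N + 1) by apply: divr_ge0; lra.
  nra.
case: (ltrP 1 N) => [N2|N1].
  have N2' : 2 <= N.
    by move: N2; rewrite /N ltr1n ler_nat.
  have aU := alphaU_ge0 S1 SN N2'.
  have aS := alphaS_ge0 S1 SN N2'.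
  apply: addr_ge0; [apply: addr_ge0|]; apply: mulr_ge0 => //.
have eN1 : N = 1 by apply/eqP; rewrite eq_le N1 /=; move: N0; rewrite /N ltr0n ler1n.
have eS1 : S = 1 by apply/eqP; rewrite eq_le S1 andbT -eN1.
rewrite /k /p /q /c3 eS1 eN1 !subrr !mulr0 !mul0r !divr1 ?mul0r.
have e4 : 3 / (2 * (1 + 1)) = 3 / 4 :> R by field.
rewrite e4.
apply: addr_ge0; [apply: addr_ge0|]; apply: mulr_ge0 => //; try lra.
by move: aH; rewrite /p eS1 eN1 divr1 !mul1r.
Qed.
End Num.

Section Core.
Variables (R : realType) (n s : nat).

Definition meanS (a : R) (y : 'I_n -> R) := (a + \sum_i y i) / n.+1%:R.
Definition PhiS (a : R) (y : 'I_n -> R) :=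
  (a - meanS a y) ^+ 2 + \sum_i (y i - meanS a y) ^+ 2.
Definition newW (B : {set 'I_n}) (a : R) (y h : 'I_n -> R) :=
  (s.+1%:R)^-1 * (a + \sum_(i in B) (y i - h i)).
Definition newY (B : {set 'I_n}) (a : R) (y h : 'I_n -> R) (i : 'I_n) := if i \in B then newW B a y h else y i.

Lemma sumsq_shift (P : pred 'I_n) (f : 'I_n -> R) c :
  \sum_(i | P i) (f i - c) ^+ 2 =
  \sum_(i | P i) f i ^+ 2 - 2 * c * \sum_(i | P i) f i + \sum_(i | P i) c ^+ 2.
Proof.
rewrite (eq_bigr (fun i => (f i ^+ 2 - 2 * c * f i) + c ^+ 2)); last by move=> i _; ring.
by rewrite big_split /= sumrB mulr_sumr.
Qed.

Lemma sum_shift (P : pred 'I_n) (f : 'I_n -> R) c :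
  \sum_(i | P i) (f i - c) = \sum_(i | P i) f i - \sum_(i | P i) c.
Proof. by rewrite sumrB. Qed.

Lemma split_sum (B : {set 'I_n}) (F : 'I_n -> R) :
  \sum_i F i = \sum_(i in B) F i + \sum_(i | i \notin B) F i.
Proof. by rewrite (bigID (mem B)). Qed.

Lemma PhiS_alt a y :
  PhiS a y = a ^+ 2 + \sum_i y i ^+ 2 - (a + \sum_i y i) ^+ 2 / n.+1%:R.
Proof.
rewrite /PhiS sumsq_shift sumr_const card_ord /meanS.
rewrite -mulr_natl.
have hn : (n.+1%:R : R) != 0 by rewrite pnatr_eq0.
set Y := \sum_i y i. set Q := \sum_i y i ^+ 2.
by field.
Qed.

Lemma cs_sum (B : {set 'I_n}) (h : 'I_n -> R) :
  (\sum_(i in B) h i) ^+ 2 <= #|B|%:R * \sum_(i in B) h i ^+ 2.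
Proof.
set S := \sum_(i in B) h i. set Q := \sum_(i in B) h i ^+ 2.
have e : \sum_(i in B) \sum_(j in B) (h j - h i) ^+ 2 = 2 * (#|B|%:R * Q - S ^+ 2).
  under eq_bigr do rewrite sumsq_shift sumr_const.
  rewrite big_split /= sumrB.
  have -> : \sum_(i in B) Q = #|B|%:R * Q by rewrite sumr_const mulr_natl.
  have -> : \sum_(i in B) (2 * h i * S) = 2 * S * S.
    by rewrite -mulr_suml -mulr_sumr.
  have -> : \sum_(i in B) (h i ^+ 2 *+ #|B|) = #|B|%:R * Q by rewrite sumrMnl mulr_natl.
  ring.
have : 0 <= \sum_(i in B) \sum_(j in B) (h j - h i) ^+ 2.
  by apply: sumr_ge0 => i _; apply: sumr_ge0 => j _; exact: sqr_ge0.
by rewrite e pmulr_rge0 // subr_ge0.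
Qed.

Lemma perB (B : {set 'I_n}) a y h : #|B| = s ->
  PhiS (newW B a y h) (newY B a y h) <=
  PhiS a y - ((a - meanS a y) ^+ 2 + \sum_(i in B) (y i - meanS a y) ^+ 2)
  + 3 / (2 * s.+1%:R) * (a - meanS a y + \sum_(i in B) (y i - meanS a y)) ^+ 2
  + (2 + (n%:R - s%:R) / n.+1%:R) / s.+1%:R * (\sum_(i in B) h i) ^+ 2.
Proof.
move=> cB.
have em0 : meanS a y = meanS a y by []. set m := meanS a y in em0 *.
set Tin := \sum_(i in B) y i. set Tout := \sum_(i | i \notin B) y i.
set Qin := \sum_(i in B) y i ^+ 2. set Qout := \sum_(i | i \notin B) y i ^+ 2.
set H := \sum_(i in B) h i.
have eY : \sum_i y i = Tin + Tout by rewrite (split_sum B).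
have eQ : \sum_i y i ^+ 2 = Qin + Qout by rewrite (split_sum B).
have ew : newW B a y h = (a + Tin - H) / s.+1%:R.
  by rewrite /newW sumrB addrA mulrC.
have eNY : \sum_i newY B a y h i = s%:R * newW B a y h + Tout.
  rewrite (split_sum B); congr (_ + _).
    rewrite (eq_bigr (fun _ => newW B a y h)); last by move=> i iB; rewrite /newY iB.
    by rewrite sumr_const cB mulr_natl.
  by apply: eq_bigr => i iB; rewrite /newY (negbTE iB).
have eNQ : \sum_i newY B a y h i ^+ 2 = s%:R * newW B a y h ^+ 2 + Qout.
  rewrite (split_sum B); congr (_ + _).
    rewrite (eq_bigr (fun _ => newW B a y h ^+ 2)); last by move=> i iB; rewrite /newY iB.
    by rewrite sumr_const cB mulr_natl.
  by apply: eq_bigr => i iB; rewrite /newY (negbTE iB).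
have eSG : \sum_(i in B) (y i - m) ^+ 2 = Qin - 2 * m * Tin + s%:R * m ^+ 2.
  by rewrite sumsq_shift sumr_const cB -[m ^+ 2 *+ s]mulr_natl.
have eG : \sum_(i in B) (y i - m) = Tin - s%:R * m.
  by rewrite sumrB sumr_const cB -[m *+ s]mulr_natl.
have em : m = (a + (Tin + Tout)) / n.+1%:R by rewrite /m /meanS eY.
rewrite !PhiS_alt eNY eNQ eY eQ eSG eG ew em.
have s1 : (s.+1%:R : R) != 0 by rewrite pnatr_eq0.
have n1 : (n.+1%:R : R) != 0 by rewrite pnatr_eq0.
rewrite -subr_ge0.
set Mv := (a + (Tin + Tout)) / n.+1%:R.
match goal with |- is_true (_ <= ?X) =>
  have -> : X = (a - Mv + Tin - s%:R * Mv + 2 * H) ^+ 2 / (2 * s.+1%:R) end.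
  rewrite /Mv. field.
  by apply/andP; split; rewrite addrC natr1 pnatr_eq0.
apply: divr_ge0; first exact: sqr_ge0.
by rewrite mulr_ge0.
Qed.

End Core.

Section Asm.
Variables (R : realType) (n s : nat).
Hypothesis hs : (1 <= s <= n)%N.

Let n0 : (0 < n)%N. Proof. by case/andP: hs => a b; exact: leq_trans a b. Qed.
Let Mcv := Mc R n s.

Lemma Nc_ii (i : 'I_n) : Nc R s i i = s%:R / n%:R * Mcv.
Proof.
have := Nc_diag_val R s i.
have nz : (n%:R : R) != 0 by rewrite pnatr_eq0 -lt0n.
move=> e; apply: (mulfI nz); rewrite e /Mcv; field.
by [].
Qed.

Lemma Nc_ij (i j : 'I_n) : i != j ->
  Nc R s i j = s%:R * (s%:R - 1) / (n%:R * (n%:R - 1)) * Mcv.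
Proof.
move=> ij.
have n2 : (1 < n)%N.
  have hi := ltn_ord i; have hj := ltn_ord j.
  have : nat_of_ord i != nat_of_ord j by [].
  move: hi hj.
  move=> /eqP; lia.
have nz : (n%:R * (n%:R - 1) : R) != 0.
  rewrite mulf_eq0 negb_or pnatr_eq0 -lt0n n0 /= subr_eq0.
  by rewrite pnatr_eq1 neq_ltn n2 orbT.
have e := Nc_off_val R s ij.
apply: (mulfI nz); rewrite e /Mcv. field.
by move: nz; rewrite mulf_eq0 negb_or andbC.
Qed.

Lemma dsum (u : 'I_n -> R) :
  \sum_i \sum_j Nc R s i j * (u i * u j) =
  s%:R / n%:R * Mcv * \sum_i u i ^+ 2 +
  s%:R * (s%:R - 1) / (n%:R * (n%:R - 1)) * Mcv * ((\sum_i u i) ^+ 2 - \sum_i u i ^+ 2).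
Proof.
set N1 := s%:R / n%:R * Mcv. set N2 := s%:R * (s%:R - 1) / (n%:R * (n%:R - 1)) * Mcv.
transitivity (\sum_i (N1 * u i ^+ 2 + N2 * (u i * (\sum_j u j - u i)))).
  apply: eq_bigr => i _.
  rewrite (bigD1 i) //= Nc_ii -/N1 expr2; congr (_ + _).
  have -> : \sum_j u j - u i = \sum_(j | j != i) u j.
    by rewrite [\sum_j u j](bigD1 i) //= addrC addrK.
  rewrite mulr_sumr mulr_sumr.
  apply: eq_bigr => j ji; rewrite Nc_ij; last by rewrite eq_sym.
  by rewrite -/N2.
rewrite big_split /= -!mulr_sumr; congr (_ + _); congr (_ * _).
rewrite expr2 mulr_suml -sumrB; apply: eq_bigr => i _.
by rewrite mulrBr expr2.
Qed.

Lemma sumB_const (c : R) : \sum_(B : {set 'I_n} | #|B| == s) c = c * Mcv.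
Proof. by rewrite /Mcv /Mc mulr_sumr; apply: eq_bigr => B _; rewrite mulr1. Qed.


Lemma lin_sumB (c0 c1 c2 c3 c4 : R) (A1 A2 A3 A4 : {set 'I_n} -> R) :
  \sum_(B : {set 'I_n} | #|B| == s) (c0 + c1 * A1 B + c2 * A2 B + c3 * A3 B + c4 * A4 B) =
  c0 * Mcv + c1 * \sum_(B : {set 'I_n} | #|B| == s) A1 B
  + c2 * \sum_(B : {set 'I_n} | #|B| == s) A2 B
  + c3 * \sum_(B : {set 'I_n} | #|B| == s) A3 B
  + c4 * \sum_(B : {set 'I_n} | #|B| == s) A4 B.
Proof. by rewrite !big_split /= sumB_const -!mulr_sumr. Qed.

Lemma coreS (a : R) (y h : 'I_n -> R) :
  \sum_(B : {set 'I_n} | #|B| == s) PhiS (newW s B a y h) (newY s B a y h) <=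
  Mcv * ((1 - n%:R^-1 * ((s * (n - s))%:R / (2 * n.+1 * s.+1)%:R)) * PhiS a y
         + 3 * (s%:R ^+ 2 / n%:R) * \sum_i h i ^+ 2).
Proof.
set m := meanS a y. set u0 := a - m.
pose u i := y i - m.
pose c3 : R := 3 / (2 * s.+1%:R). pose cH : R := (2 + (n%:R - s%:R) / n.+1%:R) / s.+1%:R.
have cH0 : 0 <= cH.
  apply: divr_ge0 => //; apply: addr_ge0 => //; apply: divr_ge0 => //.
  by rewrite subr_ge0 ler_nat; case/andP: hs.
pose A1 (B : {set 'I_n}) := \sum_(i in B) u i ^+ 2.
pose A2 (B : {set 'I_n}) := \sum_(i in B) u i.
pose A3 (B : {set 'I_n}) := \sum_(i in B) \sum_(j in B) u i * u j.
pose A4 (B : {set 'I_n}) := \sum_(i in B) h i ^+ 2.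
apply: (@le_trans _ _ (\sum_(B : {set 'I_n} | #|B| == s)
   ((PhiS a y - u0 ^+ 2 + c3 * u0 ^+ 2) + (-1) * A1 B + (2 * c3 * u0) * A2 B
     + c3 * A3 B + (cH * s%:R) * A4 B))).
  apply: ler_sum => B /eqP cB.
  apply: le_trans (perB (n := n) (s := s) a y h cB) _.
  have eA3 : A2 B ^+ 2 = A3 B.
    by rewrite /A3 /A2 expr2 mulr_suml; apply: eq_bigr => i _; rewrite mulr_sumr.
  have -> : PhiS a y - u0 ^+ 2 + c3 * u0 ^+ 2 + -1 * A1 B + 2 * c3 * u0 * A2 B +
     c3 * A3 B + cH * s%:R * A4 B =
     PhiS a y - (u0 ^+ 2 + A1 B) + c3 * (u0 + A2 B) ^+ 2 + cH * (s%:R * A4 B).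
    rewrite -eA3; ring.
  apply: lerD; first exact: lexx.
  apply: ler_wpM2l => //.
  by rewrite -cB; exact: cs_sum.
rewrite lin_sumB.
have sA1 : \sum_(B : {set 'I_n} | #|B| == s) A1 B = s%:R / n%:R * Mcv * \sum_i u i ^+ 2.
  rewrite /A1 sum_in mulr_sumr; apply: eq_bigr => i _; by rewrite Nc_ii.
have sA2 : \sum_(B : {set 'I_n} | #|B| == s) A2 B = s%:R / n%:R * Mcv * \sum_i u i.
  rewrite /A2 sum_in mulr_sumr; apply: eq_bigr => i _; by rewrite Nc_ii.
have sA4 : \sum_(B : {set 'I_n} | #|B| == s) A4 B = s%:R / n%:R * Mcv * \sum_i h i ^+ 2.
  rewrite /A4 sum_in mulr_sumr; apply: eq_bigr => i _; by rewrite Nc_ii.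
have sA3 := dsum u.
rewrite /A3 sum_in2 in sA3 *.
rewrite sA1 sA2 sA4 sA3.
have eU : \sum_i u i = - u0.
  rewrite /u sumrB sumr_const card_ord /u0 /m /meanS.
  have nz : (n.+1%:R : R) != 0 by rewrite pnatr_eq0.
  rewrite -mulr_natl. rewrite mulrSr in nz *. field. by rewrite addrC.
rewrite eU.
have ePhi : PhiS a y = u0 ^+ 2 + \sum_i u i ^+ 2 by [].
rewrite ePhi.
set S2 := \sum_i u i ^+ 2. set Hs := \sum_i h i ^+ 2.
have Mc0 : 0 <= Mcv by rewrite /Mcv /Mc; apply: sumr_ge0.
have S20 : 0 <= S2 by apply: sumr_ge0 => i _; exact: sqr_ge0.
have Hs0 : 0 <= Hs by apply: sumr_ge0 => i _; exact: sqr_ge0.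
apply: le_trans (final_num hs Mc0 (sqr_ge0 u0) S20 Hs0).
rewrite /c3 /cH le_eqVlt; apply/orP; left; apply/eqP; ring.
Qed.
End Asm.

Section Lift.
Variables (R : realType) (n s d : nat) (eta : R).

Definition newst (st0 : 'rV[R]_d * ('I_n -> 'rV[R]_d)) (B : {set 'I_n}) (hh : 'I_n -> 'rV[R]_d) :=
  let wn := (s.+1%:R)^-1 *: (st0.1 + \sum_(i in B) (st0.2 i - eta *: hh i)) in
  (wn, fun i => if i \in B then wn else st0.2 i).

Lemma Phi_coord (st0 : 'rV[R]_d * ('I_n -> 'rV[R]_d)) :
  Phi_of st0 = \sum_k PhiS (st0.1 0 k) (fun i => st0.2 i 0 k).
Proof.
rewrite /Phi_of /PhiS /sqnorm /mu_of /meanS.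
rewrite big_split /=; congr (_ + _).
  by apply: eq_bigr => k _; rewrite !mxE summxE mulrC.
rewrite exchange_big /=; apply: eq_bigr => k _; apply: eq_bigr => i _.
by rewrite !mxE summxE mulrC.
Qed.

Lemma newst_coord1 st0 B hh k :
  (newst st0 B hh).1 0 k =
  newW s B (st0.1 0 k) (fun i => st0.2 i 0 k) (fun i => eta * hh i 0 k).
Proof.
by rewrite /newst /newW /= !mxE summxE; congr (_ * (_ + _)); apply: eq_bigr => i _; rewrite !mxE.
Qed.

Lemma newst_coord2 st0 B hh i k :
  (newst st0 B hh).2 i 0 k =
  newY s B (st0.1 0 k) (fun i => st0.2 i 0 k) (fun i => eta * hh i 0 k) i.
Proof.
rewrite /newY /=; case: (i \in B) => //.
exact: newst_coord1.
Qed.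

Hypothesis hs : (1 <= s <= n)%N.

Lemma newst_ineq st0 hh :
  \sum_(B : {set 'I_n} | #|B| == s) Phi_of (newst st0 B hh) <=
  Mc R n s * ((1 - n%:R^-1 * ((s * (n - s))%:R / (2 * n.+1 * s.+1)%:R)) * Phi_of st0
         + 3 * (s%:R ^+ 2 / n%:R) * eta ^+ 2 * \sum_i sqnorm (hh i)).
Proof.
under eq_bigr do rewrite Phi_coord.
rewrite exchange_big /=.
apply: (@le_trans _ _ (\sum_k (Mc R n s * ((1 - n%:R^-1 * ((s * (n - s))%:R / (2 * n.+1 * s.+1)%:R))
       * PhiS (st0.1 0 k) (fun i => st0.2 i 0 k)
         + 3 * (s%:R ^+ 2 / n%:R) * \sum_i (eta * hh i 0 k) ^+ 2)))).
  apply: ler_sum => k _.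
  rewrite (eq_bigr (fun B => PhiS (newW s B (st0.1 0 k) (fun i => st0.2 i 0 k) (fun i => eta * hh i 0 k))
      (newY s B (st0.1 0 k) (fun i => st0.2 i 0 k) (fun i => eta * hh i 0 k)))); last first.
    move=> B _; rewrite newst_coord1; congr PhiS; apply/funext => i; exact: newst_coord2.
  exact: coreS.
rewrite -mulr_sumr; apply: ler_wpM2l; first by rewrite /Mc; apply: sumr_ge0.
rewrite big_split /= -!mulr_sumr -Phi_coord.
rewrite le_eqVlt; apply/orP; left; apply/eqP; congr (_ + _).
rewrite -mulrA; congr (_ * _).
rewrite /sqnorm mulr_sumr exchange_big /=; apply: eq_bigr => i _.
rewrite mulr_sumr; apply: eq_bigr => k _; by rewrite exprMn.
Qed.
End Lift.

Section MProc.
Context (R : realType) (dT : measure_display) (T : measurableType dT).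
Variable G : set (set T).
Variables (n s d : nat) (eta : R).
Local Notation mG := (@mG R dT T G).

Lemma mG_PhiS (a : T -> R) (y : 'I_n -> T -> R) :
  mG a -> (forall i, mG (y i)) -> mG (fun x => PhiS (a x) (fun i => y i x)).
Proof.
move=> ma my.
have mm : mG (fun x => meanS (a x) (fun i => y i x)).
  rewrite /meanS; apply: mG_mul; last exact: mG_cst.
  by apply: mG_add => //; apply: mG_sum => i _ _.
rewrite /PhiS; apply: mG_add.
  by rewrite /GRing.exp /=; apply: mG_mul; apply: mG_sub.
apply: mG_sum => i _ _.
by rewrite /GRing.exp /=; apply: mG_mul; apply: mG_sub.
Qed.

Lemma mG_Phi_of (stf : T -> 'rV[R]_d * ('I_n -> 'rV[R]_d)) :
  (forall k, mG (fun x => (stf x).1 0 k)) -> (forall i k, mG (fun x => (stf x).2 i 0 k)) ->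
  mG (fun x => Phi_of (stf x)).
Proof.
move=> m1 m2; apply: (mG_ext (f := fun x => \sum_k PhiS ((stf x).1 0 k) (fun i => (stf x).2 i 0 k))).
  by move=> x; rewrite Phi_coord.
apply: mG_sum => k _ _; apply: mG_PhiS => // i; exact: m2.
Qed.

Lemma mG_sqnorm (v : T -> 'rV[R]_d) : (forall k, mG (fun x => v x 0 k)) ->
  mG (fun x => sqnorm (v x)).
Proof.
move=> mv; rewrite /sqnorm; apply: mG_sum => k _ _.
by rewrite /GRing.exp /=; apply: mG_mul.
Qed.

Lemma mG_newst (st0 : T -> 'rV[R]_d * ('I_n -> 'rV[R]_d)) (Bf : T -> {set 'I_n})
   (hh : T -> 'I_n -> 'rV[R]_d) :
  (forall k, mG (fun x => (st0 x).1 0 k)) -> (forall i k, mG (fun x => (st0 x).2 i 0 k)) ->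
  (forall i, mG (fun x => (i \in Bf x)%:R)) -> (forall i k, mG (fun x => hh x i 0 k)) ->
  (forall k, mG (fun x => (newst s eta (st0 x) (Bf x) (hh x)).1 0 k)) /\
  (forall i k, mG (fun x => (newst s eta (st0 x) (Bf x) (hh x)).2 i 0 k)).
Proof.
move=> m1 m2 mB mh.
have mW : forall k, mG (fun x => (newst s eta (st0 x) (Bf x) (hh x)).1 0 k).
  move=> k; apply: (mG_ext (f := fun x => (s.+1%:R)^-1 * ((st0 x).1 0 k +
      \sum_i ((i \in Bf x)%:R * ((st0 x).2 i 0 k - eta * hh x i 0 k))))).
    move=> x; rewrite newst_coord1 /newW; congr (_ * (_ + _)).
    rewrite [RHS]big_mkcond /=; apply: eq_bigr => i _.
    by case: (i \in Bf x); rewrite ?mul1r ?mul0r.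
  apply: mG_mul; first exact: mG_cst.
  apply: mG_add => //; apply: mG_sum => i _ _; apply: mG_mul => //.
  by apply: mG_sub => //; apply: mG_mul => //; exact: mG_cst.
split => // i k.
apply: (mG_ext (f := fun x => (i \in Bf x)%:R * (newst s eta (st0 x) (Bf x) (hh x)).1 0 k
    + (1 - (i \in Bf x)%:R) * (st0 x).2 i 0 k)).
  move=> x; rewrite /newst /=; case: (i \in Bf x); rewrite /= ?mul1r ?mul0r ?subrr ?mul0r ?addr0 ?add0r ?subr0 ?mul1r //.
apply: mG_add; apply: mG_mul => //.
by apply: mG_sub => //; exact: mG_cst.
Qed.

End MProc.

Section Proc.
Context (R : realType) (dT : measure_display) (T : measurableType dT)
  (P : probability T R) (n s K d : nat) (eta : R) (w0 : 'rV[R]_d)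
  (Ssel : nat -> T -> {set 'I_n}) (E : nat -> 'I_n -> T -> nat)
  (htil : nat -> 'I_n -> nat -> T -> 'rV[R]_d) (stoch : bool).
Hypothesis K1 : (1 <= K)%N.

Local Notation st := (favano_state P s K eta w0 Ssel E htil stoch).

Definition alph r (c : nat) (i : 'I_n) : R :=
  if stoch then fine (P [set y | (0 < E r i y)%N]) * c%:R
  else fine (\int[P]_y ((minn (E r i y) K)%:R)%:E)%E.
Definition hcv r (c : nat) (i : 'I_n) (x : T) : 'rV[R]_d :=
  if (0 < c)%N then (alph r c i)^-1 *: \sum_(1 <= q < c.+1) htil r i q x else 0.

Lemma hcheckE r i x : hcheck P K E htil stoch r i x = hcv r (minn (E r i x) K) i x.
Proof. by rewrite /hcheck /hcv /alphaw /alph leq_min K1 andbT. Qed.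

Lemma stE r x : st r.+1 x = newst s eta (st r x) (Ssel r.+1 x) (fun i => hcheck P K E htil stoch r.+1 i x).
Proof. by []. Qed.

Lemma sum_sel (m : nat) (f : nat -> R) : (m < K.+1)%N ->
  f m = \sum_(c < K.+1) (m == c)%:R * f c.
Proof.
move=> hm; rewrite (bigD1 (Ordinal hm)) //= eqxx mul1r big1 ?addr0 // => c cm.
suff -> : (m == c) = false by rewrite mul0r.
by apply/negbTE; move: cm; rewrite eq_sym -val_eqE.
Qed.

Variable t : nat.
Definition G2 := past_events Ssel E htil t.+1 `|`
  [set A | exists i q, (1 <= q)%N /\ vec_events (htil t.+1 i q) A].
Local Notation mG := (@mG R dT T G2).

Lemma mh r i q k : (1 <= r <= t.+1)%N -> (1 <= q)%N -> mG (fun x => htil r i q x 0 k).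
Proof.
move=> hr hq; apply: mG_gen => U mU.
case/andP: hr => r1; rewrite leq_eqVlt => /orP[/eqP ->|rt].
  by right; exists i, q; split => //; exists k, U.
left; exists r; split; first by rewrite r1.
by right; right; exists i, q; split => //; exists k, U.
Qed.

Lemma mS r B : (1 <= r <= t)%N -> <<s G2 >> [set x | Ssel r x = B].
Proof.
move=> /andP[r1 rt]; apply: sub_sigma_algebra; left; exists r; split.
  by rewrite r1 ltnS.
by left; exists B.
Qed.

Lemma mE r i m : (1 <= r <= t)%N -> <<s G2 >> [set x | E r i x = m].
Proof.
move=> /andP[r1 rt]; apply: sub_sigma_algebra; left; exists r; split.
  by rewrite r1 ltnS.
by right; left; exists i, m.
Qed.

Lemma mSin r i : (1 <= r <= t)%N -> mG (fun x => (i \in Ssel r x)%:R).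
Proof.
move=> hr.
apply: (mG_ext (f := fun x => \sum_(B : {set 'I_n}) (Ssel r x == B)%:R * (i \in B)%:R)).
  move=> x; rewrite (bigD1 (Ssel r x)) //= eqxx mul1r big1 ?addr0 // => B.
  by rewrite eq_sym => /negbTE ->; rewrite mul0r.
apply: mG_sum => B _ _; apply: mG_mul; last exact: mG_cst.
apply: mG_indb.
have -> : [set x | Ssel r x == B] = [set x | Ssel r x = B].
  by apply/seteqP; split => x /= /eqP.
exact: mS.
Qed.

Lemma mhcv r c i k : (1 <= r <= t.+1)%N -> mG (fun x => hcv r c i x 0 k).
Proof.
move=> hr; rewrite /hcv; case: (0 < c)%N.
  apply: (mG_ext (f := fun x => (alph r c i)^-1 * \sum_(q <- index_iota 1 c.+1) htil r i q x 0 k)).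
    by move=> x; rewrite !mxE summxE.
  apply: mG_mul; first exact: mG_cst.
  apply: mG_sum => q; rewrite mem_index_iota => /andP[q1 _] _; exact: mh.
by apply: (mG_ext (f := fun _ => 0)); [move=> x; rewrite mxE | exact: mG_cst].
Qed.

Lemma mhcheck r i k : (1 <= r <= t)%N -> mG (fun x => hcheck P K E htil stoch r i x 0 k).
Proof.
move=> hr.
apply: (mG_ext (f := fun x => \sum_(c < K.+1) (minn (E r i x) K == c)%:R * hcv r c i x 0 k)).
  move=> x; rewrite hcheckE.
  rewrite -(sum_sel (fun c => hcv r c i x 0 k)) //.
  by rewrite ltnS geq_minr.
apply: mG_sum => c _ _; apply: mG_mul.
  by apply: mG_indb; apply: level_min => m; exact: mE.
by apply: mhcv; case/andP: hr => -> /= /leqW.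
Qed.

Lemma mst r : (r <= t)%N ->
  (forall k, mG (fun x => (st r x).1 0 k)) /\ (forall i k, mG (fun x => (st r x).2 i 0 k)).
Proof.
elim: r => [_|r IH hr].
  by split => *; exact: mG_cst.
have [m1 m2] := IH (ltnW hr).
have := @mG_newst R dT T G2 n s d eta (fun x => st r x) (fun x => Ssel r.+1 x)
   (fun x i => hcheck P K E htil stoch r.+1 i x) m1 m2.
case.
- by move=> i; apply: mSin; rewrite hr.
- by move=> i k; apply: mhcheck; rewrite hr.
by move=> a b; split.
Qed.

End Proc.

Section Main.
Context (R : realType) (dT : measure_display) (T : measurableType dT)
  (P : probability T R) (n s K d : nat) (eta : R) (w0 : 'rV[R]_d)
  (Ssel : nat -> T -> {set 'I_n}) (E : nat -> 'I_n -> T -> nat)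
  (htil : nat -> 'I_n -> nat -> T -> 'rV[R]_d) (stoch : bool).
Hypothesis K1 : (1 <= K)%N.
Hypothesis hs : (1 <= s <= n)%N.
Hypothesis hmh : forall t i q (k : 'I_d), measurable_fun setT (fun x => htil t i q x 0 k).
Hypothesis hmE : forall t i m, measurable [set x | E t i x = m].
Hypothesis hmS : forall t (B : {set 'I_n}), measurable [set x | Ssel t x = B].
Variable t : nat.

Local Notation st := (favano_state P s K eta w0 Ssel E htil stoch).
Local Notation G2 := (G2 Ssel E htil t).

Definition cv (x : T) : {ffun 'I_n -> 'I_K.+1} := [ffun i => inord (minn (E t.+1 i x) K)].
Definition hcc (c : {ffun 'I_n -> 'I_K.+1}) (x : T) (i : 'I_n) : 'rV[R]_d :=
  hcv P K E htil stoch t.+1 (c i) i x.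
Definition FF (B : {set 'I_n}) (c : {ffun 'I_n -> 'I_K.+1}) (x : T) : R :=
  Phi_of (newst s eta (st t x) B (hcc c x)).

Lemma pw1 i x : hcheck P K E htil stoch t.+1 i x = hcc (cv x) x i.
Proof. by rewrite hcheckE // /hcc /cv ffunE inordK // ltnS geq_minr. Qed.

Lemma pw2 x : st t.+1 x = newst s eta (st t x) (Ssel t.+1 x) (hcc (cv x) x).
Proof. by rewrite stE; congr newst; apply/funext => i; rewrite pw1. Qed.

Lemma in_bigsetI (I : eqType) (r : seq I) (F : I -> set T) x :
  (\big[setI/setT]_(i <- r) F i) x <-> (forall i, i \in r -> F i x).
Proof.
elim: r => [|a r IH]; first by rewrite big_nil; split.
rewrite big_cons; split.
  by move=> [Fa /IH H] i; rewrite inE => /orP[/eqP ->|/H].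
move=> H; split; first by apply: H; rewrite inE eqxx.
by apply/IH => i ir; apply: H; rewrite inE ir orbT.
Qed.

Lemma cv_setE c : [set x | cv x = c] =
  \big[setI/setT]_(i <- enum 'I_n) [set x | minn (E t.+1 i x) K == c i].
Proof.
apply/seteqP; split => x.
  move=> /= e; apply/in_bigsetI => i _ /=; rewrite -e /cv ffunE inordK //.
  by rewrite ltnS geq_minr.
move/in_bigsetI => H /=; apply/ffunP => i; rewrite ffunE.
have /= /eqP -> := H i (mem_enum _ i); exact: inord_val.
Qed.

Lemma cv_sigma (H : set (set T)) : (forall i m, <<s H >> [set x | E t.+1 i x = m]) ->
  forall c, <<s H >> [set x | cv x = c].
Proof.
move=> hH c; rewrite cv_setE.
apply: (@bigsetI_measurable _ (g_sigma_algebraType H)) => i _.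
by apply: level_min => m; exact: hH.
Qed.

Lemma cv_meas c : measurable [set x | cv x = c].
Proof.
rewrite cv_setE; apply: bigsetI_measurable => i _.
have := @level_min dT T measurable (E t.+1 i) K (c i).
rewrite (_ : <<s measurable >> = measurable); first by apply => m; exact: hmE.
exact: smallest_id (@sigma_algebra_measurable _ T).
Qed.

Lemma G2_meas : G2 `<=` measurable.
Proof.
move=> A [[r [_ [[B ->]|[[i [m ->]]|[i [q [_ [k [U [mU ->]]]]]]]]]]|[i [q [_ [k [U [mU ->]]]]]]].
- exact: hmS.
- exact: hmE.
- by have := hmh r i q k measurableT mU; rewrite setTI.
- by have := hmh t.+1 i q k measurableT mU; rewrite setTI.
Qed.


Local Notation mG2 := (@mG R dT T G2).

Lemma mst_t : (forall k, mG2 (fun x => (st t x).1 0 k)) /\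
  (forall i k, mG2 (fun x => (st t x).2 i 0 k)).
Proof. exact: (mst P s eta w0 Ssel E htil stoch K1 (leqnn t)). Qed.

Lemma mhcc c i k : mG2 (fun x => hcc c x i 0 k).
Proof. by apply: mhcv; rewrite ltnS leqnn. Qed.

Lemma mFF B c : mG2 (FF B c).
Proof.
have [m1 m2] := mst_t.
have [n1 n2] := @mG_newst R dT T G2 n s d eta (fun x => st t x) (fun _ => B)
   (fun x => hcc c x) m1 m2 (fun i => mG_cst _) (fun i k => mhcc c i k).
exact: mG_Phi_of.
Qed.

Lemma mPhi_t : mG2 (fun x => Phi_of (st t x)).
Proof. by have [m1 m2] := mst_t; exact: mG_Phi_of. Qed.

Lemma mhsq c i : mG2 (fun x => sqnorm (hcc c x i)).
Proof. by apply: mG_sqnorm => k; exact: mhcc. Qed.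

Lemma mT (f : T -> R) : mG2 f -> measurable_fun setT f.
Proof. exact: (mTT' G2_meas). Qed.

Definition kap : R := n%:R^-1 * ((s * (n - s))%:R / (2 * n.+1 * s.+1)%:R).
Definition cK : R := 3 * (s%:R ^+ 2 / n%:R) * eta ^+ 2.
Definition Gc (c : {ffun 'I_n -> 'I_K.+1}) (x : T) : R :=
  (1 - kap) * Phi_of (st t x) + cK * \sum_i sqnorm (hcc c x i).
Definition pB (B : {set 'I_n}) : R := if #|B| == s then ('C(n, s)%:R)^-1 else 0.

Lemma kap_le1 : kap <= 1.
Proof.
have n0 : (0 < n)%N by case/andP: hs => a b; exact: leq_trans a b.
rewrite /kap kappaE //; last by case/andP: hs.
have S0 : (0 : R) <= s%:R by [].
have SN : (s%:R : R) <= n%:R by rewrite ler_nat; case/andP: hs.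
have N1 : (1 : R) <= n%:R by rewrite ler1n.
rewrite ler_pdivrMr; last first.
  by apply: mulr_gt0; [apply: mulr_gt0; [apply: mulr_gt0|]|]; lra.
nra.
Qed.

Lemma cK_ge0 : 0 <= cK.
Proof. by rewrite /cK; apply: mulr_ge0; [apply: mulr_ge0 => //; apply: divr_ge0|exact: sqr_ge0]. Qed.

Lemma Phi_ge0 (st0 : 'rV[R]_d * ('I_n -> 'rV[R]_d)) : 0 <= Phi_of st0.
Proof.
rewrite /Phi_of /sqnorm; apply: addr_ge0; first by apply: sumr_ge0 => k _; exact: sqr_ge0.
by apply: sumr_ge0 => i _; apply: sumr_ge0 => k _; exact: sqr_ge0.
Qed.

Lemma sqnorm_ge0 (v : 'rV[R]_d) : 0 <= sqnorm v.
Proof. by apply: sumr_ge0 => k _; exact: sqr_ge0. Qed.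

Lemma Gc_ge0 c x : 0 <= Gc c x.
Proof.
apply: addr_ge0; apply: mulr_ge0; rewrite ?subr_ge0 ?kap_le1 ?Phi_ge0 ?cK_ge0 //.
by apply: sumr_ge0 => i _; exact: sqnorm_ge0.
Qed.

Lemma mGc c : mG2 (Gc c).
Proof.
apply: mG_add; apply: mG_mul; try exact: mG_cst.
  exact: mPhi_t.
by apply: mG_sum => i _ _; exact: mhsq.
Qed.

Lemma Mc_C : Mc R n s = 'C(n, s)%:R.
Proof.
rewrite /Mc -[X in 'C(X, s)](card_ord n) -card_draws -sum1dep_card natr_sum.
by [].
Qed.

Lemma pw3 c x : \sum_B pB B * FF B c x <= Gc c x.
Proof.
have C0 : ('C(n, s)%:R : R) != 0 by rewrite pnatr_eq0 -lt0n bin_gt0; case/andP: hs.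
rewrite /pB.
rewrite (eq_bigr (fun B : {set 'I_n} => if #|B| == s then ('C(n, s)%:R)^-1 * FF B c x else 0)); last first.
  by move=> B _; case: ifP; rewrite ?mul0r.
rewrite -big_mkcond /= -mulr_sumr.
have := newst_ineq eta hs (st t x) (hcc c x).
rewrite Mc_C -/kap => H.
rewrite -(ler_pM2l (_ : 0 < ('C(n, s)%:R : R))); last first.
  by rewrite ltr0n bin_gt0; case/andP: hs.
rewrite mulrA mulfV // mul1r.
apply: (le_trans H); rewrite /Gc /cK le_eqVlt; apply/orP; left; apply/eqP.
by rewrite mulrA.
Qed.

Lemma int_sumR (I : Type) (r : seq I) (f : I -> T -> R) :
  (forall i, measurable_fun setT (f i)) -> (forall i x, 0 <= f i x) ->
  (\int[P]_x (\sum_(i <- r) f i x)%:E = \sum_(i <- r) \int[P]_x (f i x)%:E)%E.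
Proof.
move=> mf f0.
under eq_integral do rewrite -sumEFin.
apply: ge0_integral_sum => //.
  by move=> i; apply/measurable_EFinP.
by move=> i x _; rewrite lee_fin.
Qed.

Lemma int_ind (A : set T) (b : T -> bool) (f : T -> R) : (forall x, b x = (x \in A)) ->
  (\int[P]_x ((b x)%:R * f x)%:E = \int[P]_(x in A) (f x)%:E)%E.
Proof.
move=> hb; rewrite [RHS]integral_mkcond; apply: eq_integral => x _.
by rewrite patchE -hb; case: (b x); rewrite ?mul1r ?mul0r.
Qed.


Lemma mT_indb (b : T -> bool) : measurable [set x | b x] ->
  measurable_fun setT (fun x => (b x)%:R : R).
Proof.
move=> mb; rewrite (_ : (fun x => (b x)%:R) = \1_[set x | b x]).
  exact: measurable_indic.
apply/funext => x; rewrite indicE; case: (boolP (b x)) => bx.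
  by rewrite mem_set.
by rewrite memNset ?(negbTE bx) //=; apply/negP.
Qed.

Definition AA (B : {set 'I_n}) (c : {ffun 'I_n -> 'I_K.+1}) :=
  [set x | Ssel t.+1 x = B] `&` [set x | cv x = c].

Lemma AA_mem B c x : ((Ssel t.+1 x == B) && (cv x == c)) = (x \in AA B c).
Proof.
apply/idP/idP.
  by move=> /andP[/eqP e1 /eqP e2]; rewrite mem_set.
by move/set_mem => [/= -> ->]; rewrite !eqxx.
Qed.

Lemma AA_meas B c : measurable (AA B c).
Proof. by apply: measurableI; [exact: hmS|exact: cv_meas]. Qed.

Lemma cv_mem c x : (cv x == c) = (x \in [set y | cv y = c]).
Proof.
apply/idP/idP; first by move/eqP => e; rewrite mem_set.
by move/set_mem => /= ->.
Qed.

Lemma main_ineq :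
  (forall B, P [set x | Ssel t.+1 x = B] = (pB B)%:E) ->
  indep_gen P (subset_events (Ssel t.+1) `|` [set A | exists i, nat_events (E t.+1 i) A]) G2 ->
  indep_gen P (subset_events (Ssel t.+1)) [set A | exists i, nat_events (E t.+1 i) A] ->
  (\int[P]_x (Phi_of (st t.+1 x))%:E <=
   (1 - kap)%:E * \int[P]_x (Phi_of (st t x))%:E +
   cK%:E * \sum_(i < n) \int[P]_x (sqnorm (hcheck P K E htil stoch t.+1 i x))%:E)%E.
Proof.
move=> hU hI1 hI2.
pose G1 := subset_events (Ssel t.+1) `|` [set A | exists i, nat_events (E t.+1 i) A].
have hE1 i m : <<s G1 >> [set x | E t.+1 i x = m] by apply: sub_sigma_algebra; right; exists i, m.
have hA1 B c : <<s G1 >> (AA B c).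
  apply: (@measurableI _ (g_sigma_algebraType G1)).
    by apply: sub_sigma_algebra; left; exists B.
  exact: cv_sigma hE1 c.
have mind B c : measurable_fun setT (fun x => ((Ssel t.+1 x == B) && (cv x == c))%:R : R).
  apply: mT_indb; rewrite (_ : [set x | _] = AA B c); first exact: AA_meas.
  apply/seteqP; split => x /=.
    by rewrite AA_mem => /set_mem.
  by move=> h; rewrite AA_mem; apply/mem_set.
have FF0 B c x : 0 <= FF B c x by exact: Phi_ge0.
have e1 x : Phi_of (st t.+1 x) =
    \sum_B \sum_c ((Ssel t.+1 x == B) && (cv x == c))%:R * FF B c x.
  rewrite pw2 (bigD1 (Ssel t.+1 x)) //=.
  rewrite [X in _ + X]big1 ?addr0; last first.
    by move=> B hB; apply: big1 => c _; rewrite eq_sym (negbTE hB) mul0r.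
  rewrite (bigD1 (cv x)) //= !eqxx mul1r [X in _ + X]big1 ?addr0 //.
  by move=> c hc; rewrite /= eq_sym (negbTE hc) mul0r.
under eq_integral do rewrite e1.
rewrite int_sumR; last 2 first.
- move=> B; apply: measurable_sum => c; apply: measurable_funM; first exact: mind.
  by apply: mT; exact: mFF.
- by move=> B x; apply: sumr_ge0 => c _; apply: mulr_ge0.
have pB0 B : 0 <= pB B by rewrite /pB; case: ifP => // _; rewrite invr_ge0.
have hSS B : <<s subset_events (Ssel t.+1) >> [set x | Ssel t.+1 x = B].
  by apply: sub_sigma_algebra; exists B.
have hcvE c : <<s [set A | exists i, nat_events (E t.+1 i) A] >> [set x | cv x = c].
  by apply: cv_sigma => i m; apply: sub_sigma_algebra; exists i, m.
have e2 B : (\int[P]_x (\sum_c ((Ssel t.+1 x == B) && (cv x == c))%:R * FF B c x)%:E =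
    \sum_c ((pB B)%:E * (P [set x | cv x = c] * \int[P]_x (FF B c x)%:E)))%E.
  rewrite int_sumR; last 2 first.
  - move=> c; apply: measurable_funM; first exact: mind.
    by apply: mT; exact: mFF.
  - by move=> c x; apply: mulr_ge0.
  apply: eq_bigr => c _.
  rewrite (int_ind (A := AA B c)); last by move=> x; exact: AA_mem.
  rewrite (@indep_integral _ _ _ P G2 G2_meas (AA B c) (AA_meas B c) _ (FF B c)); last 3 first.
  - by move=> C hC; apply: hI1 => //; exact: hA1.
  - exact: mFF.
  - by move=> x; exact: FF0.
  by rewrite /AA hI2 // hU muleA.
under eq_bigr do rewrite e2.
rewrite exchange_big /=.
have e3 c : (\int[P]_x (\sum_B pB B * FF B c x)%:E =
    \sum_B ((pB B)%:E * \int[P]_x (FF B c x)%:E))%E.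
  rewrite int_sumR; last 2 first.
  - move=> B; apply: measurable_funM; first exact: measurable_cst.
    by apply: mT; exact: mFF.
  - by move=> B x; apply: mulr_ge0.
  apply: eq_bigr => B _; under eq_integral do rewrite EFinM.
  rewrite ge0_integralZl //.
  - by apply/measurable_EFinP; apply: mT; exact: mFF.
  - by move=> x _; rewrite lee_fin.
  - by rewrite lee_fin.
have mGcT c : measurable_fun setT (Gc c) by apply: mT; exact: mGc.
apply: (@le_trans _ _ (\sum_c (P [set x | cv x = c] * \int[P]_x (Gc c x)%:E))%E).
  apply: lee_sum => c _.
  rewrite (eq_bigr (fun B => P [set x | cv x = c] * ((pB B)%:E * \int[P]_x (FF B c x)%:E)))%E; last first.
    by move=> B _; rewrite muleCA.
  rewrite -ge0_sume_distrr; last first.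
    by move=> B _; apply: mule_ge0; [rewrite lee_fin|apply: integral_ge0 => x _; rewrite lee_fin].
  apply: lee_wpmul2l => //.
  have mS3 : measurable_fun setT (fun x => \sum_B pB B * FF B c x).
    apply: measurable_sum => B; apply: measurable_funM.
      exact: measurable_cst.
    by apply: mT; exact: mFF.
  rewrite -e3; apply: ge0_le_integral => //.
  all: try (by move=> x _; rewrite lee_fin; apply: sumr_ge0 => B _; apply: mulr_ge0).
  all: try (by apply/measurable_EFinP).
  all: try (by move=> x _; rewrite lee_fin; exact: Gc_ge0).
  all: try (by move=> x _; rewrite lee_fin; exact: pw3).
have e4 c : (P [set x | cv x = c] * \int[P]_x (Gc c x)%:E =
    \int[P]_x ((cv x == c)%:R * Gc c x)%:E)%E.
  rewrite (int_ind (A := [set x | cv x = c])); last by move=> x; exact: cv_mem.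
  rewrite (@indep_integral _ _ _ P G2 G2_meas _ (cv_meas c) _ (Gc c)) //.
  - move=> C hC; apply: hI1 => //.
    by apply: cv_sigma => i m; exact: hE1.
  - exact: mGc.
  - by move=> x; exact: Gc_ge0.
rewrite (eq_bigr _ (fun c _ => e4 c)).
rewrite -int_sumR; last 2 first.
- move=> c; apply: measurable_funM => //.
  apply: mT_indb; rewrite (_ : [set x | _] = [set x | cv x = c]); first exact: cv_meas.
  by apply/seteqP; split => x /= /eqP.
- by move=> c x; apply: mulr_ge0 => //; exact: Gc_ge0.
have e5 x : \sum_c (cv x == c)%:R * Gc c x =
    (1 - kap) * Phi_of (st t x) + cK * \sum_i sqnorm (hcheck P K E htil stoch t.+1 i x).
  rewrite (bigD1 (cv x)) //= eqxx mul1r big1 ?addr0; last first.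
    by move=> c hc; rewrite eq_sym (negbTE hc) mul0r.
  by rewrite /Gc; congr (_ + _ * _); apply: eq_bigr => i _; rewrite pw1.
under eq_integral do rewrite e5.
have mPT : measurable_fun setT (fun x => Phi_of (st t x)) by apply: mT; exact: mPhi_t.
have mHT i : measurable_fun setT (fun x => sqnorm (hcheck P K E htil stoch t.+1 i x)).
  rewrite (_ : (fun x => _) = (fun x => \sum_c (cv x == c)%:R * sqnorm (hcc c x i))).
    apply: measurable_sum => c; apply: measurable_funM.
      apply: mT_indb; rewrite (_ : [set x | _] = [set x | cv x = c]); first exact: cv_meas.
      by apply/seteqP; split => x /= /eqP.
    by apply: mT; exact: mhsq.
  apply/funext => x; rewrite (bigD1 (cv x)) //= eqxx mul1r big1 ?addr0; last first.
    by move=> c hc; rewrite eq_sym (negbTE hc) mul0r.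
  by rewrite pw1.
rewrite le_eqVlt; apply/orP; left; apply/eqP.
under eq_integral do rewrite EFinD.
rewrite ge0_integralD //; last 4 first.
- by move=> x _; rewrite lee_fin; apply: mulr_ge0; [rewrite subr_ge0 kap_le1|exact: Phi_ge0].
- apply/measurable_EFinP; apply: measurable_funM => //; exact: measurable_cst.
- by move=> x _; rewrite lee_fin; apply: mulr_ge0; [exact: cK_ge0|apply: sumr_ge0 => i _; exact: sqnorm_ge0].
- apply/measurable_EFinP; apply: measurable_funM; first exact: measurable_cst.
  by apply: measurable_sum.
congr (_ + _).
  under eq_integral do rewrite EFinM.
  rewrite ge0_integralZl //.
  - by apply/measurable_EFinP.
  - by move=> x _; rewrite lee_fin; exact: Phi_ge0.
  - by rewrite lee_fin subr_ge0 kap_le1.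
under eq_integral do rewrite EFinM.
rewrite ge0_integralZl //; last 3 first.
- by apply/measurable_EFinP; apply: measurable_sum.
- by move=> x _; rewrite lee_fin; apply: sumr_ge0 => i _; exact: sqnorm_ge0.
- by rewrite lee_fin cK_ge0.
congr (_ * _)%E; rewrite int_sumR //.
by move=> i x; exact: sqnorm_ge0.
Qed.

End Main.

Theorem mainTheorem4 (R : realType) (dT : measure_display) (T : measurableType dT)
  (P : probability T R) (n s K d : nat) (eta : R)
  (f : 'I_n -> 'rV[R]_d -> R) (w0 : 'rV[R]_d)
  (Ssel : nat -> T -> {set 'I_n}) (E : nat -> 'I_n -> T -> nat)
  (htil : nat -> 'I_n -> nat -> T -> 'rV[R]_d) (stoch : bool) :
  (1 <= n)%N -> (1 <= s <= n)%N -> (1 <= K)%N -> (1 <= d)%N -> 0 < eta ->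
  (* the f_i are differentiable *)
  (forall i x, differentiable (f i) x) ->
  (* measurability of the primitive random elements *)
  (forall t i q (k : 'I_d), measurable_fun setT (fun x => htil t i q x 0 k)) ->
  (forall t i m, measurable [set x | E t i x = m]) ->
  (forall t (B : {set 'I_n}), measurable [set x | Ssel t x = B]) ->
  (* stochastic gradient oracle: htil^i_{t,q} = grad f_i(query point) + xi,
     xi integrable with zero mean conditionally on everything generated before
     the query (past rounds and the earlier queries of client i in round t) *)
  (forall t i q (k : 'I_d), (1 <= t)%N -> (1 <= q)%N ->
     let xi := fun x => htil t i q x -
        gradf (f i) (query_point eta htil
           ((favano_state P s K eta w0 Ssel E htil stoch t.-1 x).2 i) t i q x) in
     P.-integrable setT (fun x => (xi x 0 k)%:E) /\
     forall A, <<s past_events Ssel E htil t `|`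
                   [set B | exists r, (1 <= r < q)%N /\ vec_events (htil t i r) B] >> A ->
       (\int[P]_(x in A) (xi x 0 k)%:E = 0)%E) ->
  (* E^i_t > 0 with positive probability *)
  (forall t i, (1 <= t)%N -> (0 < P [set x | (0 < E t i x)%N])%E) ->
  (* S_t uniform among subsets of size s *)
  (forall t (B : {set 'I_n}), (1 <= t)%N ->
     P [set x | Ssel t x = B] = (if #|B| == s then ('C(n, s)%:R)^-1 else 0)%:E) ->
  (* (S_t, E_t) independent of the past and of all htil_{t,.}; S_t independent of E_t *)
  (forall t, (1 <= t)%N ->
     indep_gen P (subset_events (Ssel t) `|` [set A | exists i, nat_events (E t i) A])
       (past_events Ssel E htil t `|`
          [set A | exists i q, (1 <= q)%N /\ vec_events (htil t i q) A])) ->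
  (forall t, (1 <= t)%N ->
     indep_gen P (subset_events (Ssel t)) [set A | exists i, nat_events (E t i) A]) ->
  forall t : nat,
  (* finiteness of the expectations appearing *)
  P.-integrable setT (fun x => (Phi_of (favano_state P s K eta w0 Ssel E htil stoch t x))%:E) ->
  P.-integrable setT (fun x => (Phi_of (favano_state P s K eta w0 Ssel E htil stoch t.+1 x))%:E) ->
  (forall i, P.-integrable setT (fun x => (sqnorm (hcheck P K E htil stoch t.+1 i x))%:E)) ->
  let kappa : R := n%:R^-1 * ((s * (n - s))%:R / (2 * (n.+1) * (s.+1))%:R) in
  ('E_P[fun x => Phi_of (favano_state P s K eta w0 Ssel E htil stoch t.+1 x)]
   <= (1 - kappa)%:E * 'E_P[fun x => Phi_of (favano_state P s K eta w0 Ssel E htil stoch t x)]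
      + (3 * (s%:R ^+ 2 / n%:R) * eta ^+ 2)%:E *
        \sum_(i < n) 'E_P[fun x => sqnorm (hcheck P K E htil stoch t.+1 i x)])%E.

Proof.
move=> n1 hs K1 d1 eta0 _ hmh hmE hmS _ _ hunif hind1 hind2 t _ _ _.
cbv zeta.
rewrite !expectation.unlock.
exact: (main_ineq eta w0 stoch K1 hs hmh hmE hmS (t:=t) (fun B => hunif t.+1 B isT)
  (hind1 t.+1 isT) (hind2 t.+1 isT)).
Qed.
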